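(* There is a constant $A=A(\mathcal I)>0$ such that for all $b_0,b\in\Theta$, $$A^2\max\Big\{K(\pi_{b_0},\pi_b),\ E_{b_0}\Big[\Big(\log\frac{\pi_{b_0}(X_0)}{\pi_b(X_0)}\Big)^2\Big]\Big\}\le\|b_0-b\|_2^2.$$
   Context: Known $\sigma\in C^2_{per}([0,1])$ (1-periodic $C^2$) with $0<\sigma_L\le\sigma\le\sigma_U$; known $K_0$, $\Theta=\{f\in C^1_{per}([0,1]):\|f\|_\infty+\|f'\|_\infty\le K_0\}$; $\mathcal I=\{K_0,\sigma_L,\sigma_U\}$. For $b\in\Theta$, with $I_b(x)=\int_0^x2b(y)/\sigma^2(y)dy$, $\pi_b(x)=\frac{e^{I_b(x)}}{H_b\sigma^2(x)}\big(e^{I_b(1)}\int_x^1e^{-I_b(y)}dy+\int_0^xe^{-I_b(y)}dy\big)$, $x\in[0,1]$, with $H_b$ chosen so that $\int_0^1\pi_b=1$ (the invariant density of $X\bmod1$ for the solution $X$ of $dX_t=b(X_t)dt+\sigma(X_t)dW_t$). Under $E_{b_0}$, $X_0$ has density $\pi_{b_0}$. $K(p,q)=\int\log(p/q)\,p$ is the Kullback–Leibler divergence. *)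

(* Defs.v *)
From Stdlib Require Import Reals Lra ClassicalEpsilon.
Open Scope R_scope.

(* Total Riemann integral: the value of RiemannInt when f is Riemann
   integrable on [a,b] (independent of the integrability proof), 0 otherwise.
   All integrands used below are continuous, hence integrable. *)
Definition Rint (f : R -> R) (a b : R) : R :=
  epsilon (inhabits 0)
    (fun l => exists pr : Riemann_integrable f a b, RiemannInt pr = l).

(* 1-periodic functions on R (identified with functions on [0,1] with
   periodic boundary behaviour). *)
Definition periodic1 (f : R -> R) : Prop := forall x, f (x + 1) = f x.

Definition C1per (f : R -> R) : Prop :=
  periodic1 f /\
  exists f' : R -> R, (forall x, derivable_pt_lim f x (f' x)) /\ continuity f'.

Definition C2per (f : R -> R) : Prop :=
  periodic1 f /\
  exists f' f'' : R -> R,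
    (forall x, derivable_pt_lim f x (f' x)) /\
    (forall x, derivable_pt_lim f' x (f'' x)) /\ continuity f''.

Definition Theta (K0 : R) (f : R -> R) : Prop :=
  periodic1 f /\
  exists f' : R -> R, (forall x, derivable_pt_lim f x (f' x)) /\ continuity f' /\
    exists M1 M2 : R,
      (forall x, 0 <= x <= 1 -> Rabs (f x) <= M1) /\
      (forall x, 0 <= x <= 1 -> Rabs (f' x) <= M2) /\
      M1 + M2 <= K0.

Definition Ib (sigma b : R -> R) (x : R) : R :=
  Rint (fun y => 2 * b y / (sigma y)^2) 0 x.

(* unnormalised invariant density *)
Definition pi_un (sigma b : R -> R) (x : R) : R :=
  exp (Ib sigma b x) / (sigma x)^2 *
  (exp (Ib sigma b 1) * Rint (fun y => exp (- Ib sigma b y)) x 1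
   + Rint (fun y => exp (- Ib sigma b y)) 0 x).

Definition Hb (sigma b : R -> R) : R := Rint (pi_un sigma b) 0 1.

Definition pib (sigma b : R -> R) (x : R) : R := pi_un sigma b x / Hb sigma b.

Definition KL (p q : R -> R) : R := Rint (fun x => ln (p x / q x) * p x) 0 1.

(* E_{b0}[(log(pi_{b0}(X0)/pi_b(X0)))^2] with X0 ~ pi_{b0} on [0,1] *)
Definition Elog2 (p q : R -> R) : R :=
  Rint (fun x => (ln (p x / q x))^2 * p x) 0 1.

Definition L2sq (f g : R -> R) : R := Rint (fun x => (f x - g x)^2) 0 1.

(* Main.v *)
Require Import Defs.
From Stdlib Require Import Reals.
Open Scope R_scope.
From Stdlib Require Import Lra ClassicalEpsilon FunctionalExtensionality.
From Coquelicot Require Import Coquelicot.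
Open Scope R_scope.
Notation ctR f x := (@continuous R_UniformSpace R_UniformSpace f x).

Lemma Rint_RInt f a b : ex_RInt f a b -> Rint f a b = RInt f a b.
Proof.
  intro H. pose proof (ex_RInt_Reals_0 f a b H) as pr.
  unfold Rint.
  destruct (epsilon_spec (inhabits 0)
    (fun l => exists pr : Riemann_integrable f a b, RiemannInt pr = l)) as [pr' Hp].
  { exists (RiemannInt pr). now exists pr. }
  rewrite <- Hp. symmetry. apply RInt_Reals.
Qed.

Lemma RInt_sub f g a b : ex_RInt f a b -> ex_RInt g a b ->
  RInt (fun x => f x - g x) a b = RInt f a b - RInt g a b.
Proof. intros H1 H2. exact (RInt_minus f g a b H1 H2). Qed.
Lemma RInt_add f g a b : ex_RInt f a b -> ex_RInt g a b ->
  RInt (fun x => f x + g x) a b = RInt f a b + RInt g a b.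
Proof. intros H1 H2. exact (RInt_plus f g a b H1 H2). Qed.
Lemma RInt_sc f a b l : ex_RInt f a b ->
  RInt (fun x => l * f x) a b = l * RInt f a b.
Proof. intros H1. exact (RInt_scal f a b l H1). Qed.
Lemma RInt_cst a b c : RInt (fun _ => c) a b = (b - a) * c.
Proof. exact (RInt_const a b c). Qed.
Lemma RInt_chasles f a b c : ex_RInt f a b -> ex_RInt f b c -> RInt f a b + RInt f b c = RInt f a c.
Proof. intros H1 H2. exact (RInt_Chasles f a b c H1 H2). Qed.

Lemma cmul (f g : R -> R) x : ctR f x -> ctR g x -> ctR (fun y => f y * g y) x.
Proof. intros. exact (continuous_mult f g x H H0). Qed.
Lemma cplus (f g : R -> R) x : ctR f x -> ctR g x -> ctR (fun y => f y + g y) x.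
Proof. intros. exact (continuous_plus f g x H H0). Qed.
Lemma copp (f : R -> R) x : ctR f x -> ctR (fun y => - f y) x.
Proof. intros. exact (continuous_opp f x H). Qed.
Lemma cminus (f g : R -> R) x : ctR f x -> ctR g x -> ctR (fun y => f y - g y) x.
Proof. intros. apply cplus; auto. apply copp; auto. Qed.
Lemma ccst c x : ctR (fun _ : R => c) x.
Proof. exact (continuous_const c x). Qed.
Lemma cinv (f : R -> R) x : ctR f x -> f x <> 0 -> ctR (fun y => / f y) x.
Proof. intros. exact (continuous_Rinv_comp f x H H0). Qed.
Lemma cexp (f : R -> R) x : ctR f x -> ctR (fun y => exp (f y)) x.
Proof. intros. exact (continuous_exp_comp f x H). Qed.
Lemma cln (f : R -> R) x : ctR f x -> 0 < f x -> ctR (fun y => ln (f y)) x.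
Proof. intros. apply (continuous_comp f ln x H). now apply continuous_ln. Qed.
Lemma cdiv (f g : R -> R) x : ctR f x -> ctR g x -> g x <> 0 -> ctR (fun y => f y / g y) x.
Proof. intros. unfold Rdiv. apply cmul; auto. apply cinv; auto. Qed.
Lemma cpow2 (f : R -> R) x : ctR f x -> ctR (fun y => (f y)^2) x.
Proof. intros. apply (continuous_ext (fun y => f y * f y)). intros; simpl; ring. apply cmul; auto. Qed.
Lemma cabs (f : R -> R) x : ctR f x -> ctR (fun y => Rabs (f y)) x.
Proof. intros. apply (continuous_comp f Rabs x H). apply continuous_Rabs. Qed.

Lemma cont_RInt0 (f : R -> R) : (forall x, ctR f x) -> forall x, ctR (fun t => RInt f 0 t) x.
Proof.
  intros Hf x.
  apply (ex_derive_continuous (fun t => RInt f 0 t)).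
  exists (f x). apply (is_derive_RInt f (fun t => RInt f 0 t) 0 x).
  - apply filter_forall. intros y. apply (RInt_correct (V:=R_CompleteNormedModule) f 0 y). apply (ex_RInt_continuous (V:=R_CompleteNormedModule)). intros; auto.
  - auto.
Qed.
Lemma der_cont (f : R -> R) x l : derivable_pt_lim f x l -> ctR f x.
Proof. intro H. apply (ex_derive_continuous f). exists l. now apply is_derive_Reals. Qed.


Lemma exc (f : R -> R) a b : (forall x, ctR f x) -> ex_RInt f a b.
Proof. intros H. apply (ex_RInt_continuous (V:=R_CompleteNormedModule)). intros; auto. Qed.

Lemma RInt_bound (f g : R -> R) x : (forall y, ctR f y) -> (forall y, ctR g y) -> 0 <= x <= 1 ->
  (forall y, 0 <= y <= 1 -> Rabs (f y) <= g y) -> Rabs (RInt f 0 x) <= RInt g 0 1.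
Proof.
  intros Hf Hg Hx Hb.
  apply Rle_trans with (RInt (fun t => Rabs (f t)) 0 x).
  { apply abs_RInt_le. lra. now apply exc. }
  apply Rle_trans with (RInt g 0 x).
  { apply RInt_le. lra. apply exc. intros; apply cabs; auto. now apply exc.
    intros; apply Hb; lra. }
  rewrite <- (RInt_chasles g 0 x 1) by (apply exc; auto).
  assert (0 <= RInt g x 1). { apply RInt_ge_0. lra. now apply exc.
    intros y Hy. apply Rle_trans with (Rabs (f y)). apply Rabs_pos. apply Hb; lra. }
  lra.
Qed.

Lemma CS (h : R -> R) : (forall y, ctR h y) ->
  RInt (fun x => Rabs (h x)) 0 1 <= sqrt (RInt (fun x => (h x)^2) 0 1).
Proof.
  intros Hh. set (m := RInt (fun x => Rabs (h x)) 0 1).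
  assert (Hm : 0 <= m). { apply RInt_ge_0. lra. apply exc; intros; apply cabs; auto.
    intros; apply Rabs_pos. }
  assert (H0 : 0 <= RInt (fun x => (Rabs (h x) - m)^2) 0 1).
  { apply RInt_ge_0. lra. apply exc; intros; apply cpow2, cminus; [apply cabs; auto| apply ccst].
    intros; apply pow2_ge_0. }
  rewrite (RInt_ext _ (fun x => (h x)^2 + ((-2*m) * Rabs (h x) + m^2))) in H0.
  2:{ intros x _. change (@eq R ((Rabs (h x) - m)^2) ((h x)^2 + ((-2*m) * Rabs (h x) + m^2))). rewrite <- (pow2_abs (h x)). ring. }
  assert (exh : ex_RInt (fun x => (h x)^2) 0 1) by (apply exc; intros; apply cpow2; auto).
  assert (exa : ex_RInt (fun x => Rabs (h x)) 0 1) by (apply exc; intros; apply cabs; auto).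
  rewrite RInt_add in H0; auto.
  2:{ apply (ex_RInt_plus (V:=R_CompleteNormedModule) (fun x => (-2*m) * Rabs (h x)) (fun _ => m^2)).
      apply (ex_RInt_scal (V:=R_CompleteNormedModule) (fun x => Rabs (h x))); auto.
      apply ex_RInt_const. }
  rewrite RInt_add in H0; auto.
  2:{ apply (ex_RInt_scal (V:=R_CompleteNormedModule) (fun x => Rabs (h x))); auto. }
  2:{ apply ex_RInt_const. }
  rewrite RInt_sc in H0; auto. rewrite RInt_cst in H0. fold m in H0.
  rewrite <- (sqrt_pow2 m Hm). apply sqrt_le_1_alt. nra.
Qed.


Definition Hyp (K s S : R) (sg b : R -> R) : Prop :=
  (forall x, s <= sg x <= S) /\ (forall x, ctR sg x) /\ (forall x, ctR b x) /\
  (forall x, 0 <= x <= 1 -> Rabs (b x) <= K).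
Definition Dist (b0 b : R -> R) := sqrt (RInt (fun x => (b0 x - b x)^2) 0 1).
Definition Fam := (R -> R) -> (R -> R) -> R -> R.
Definition good K s S (F : Fam) := exists B C, 0 <= C /\ forall sg b0 b,
  Hyp K s S sg b0 -> Hyp K s S sg b -> forall x, 0 <= x <= 1 ->
  Rabs (F sg b x) <= B /\ Rabs (F sg b0 x - F sg b x) <= C * Dist b0 b.
Definition ctn K s S (F : Fam) := forall sg b, Hyp K s S sg b -> forall x, ctR (F sg b) x.
Definition lowb K s S (F : Fam) := exists m, 0 < m /\ forall sg b, Hyp K s S sg b ->
  forall x, 0 <= x <= 1 -> m <= F sg b x.

Lemma Dist_ge0 b0 b : 0 <= Dist b0 b.
Proof. apply sqrt_pos. Qed.

Lemma good_bound K s S F : good K s S F -> exists B, forall sg b, Hyp K s S sg b ->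
  forall x, 0 <= x <= 1 -> Rabs (F sg b x) <= B.
Proof. intros [B [C [_ H]]]. exists B. intros sg b Hb x Hx. now apply (H sg b b). Qed.

Lemma good_ext K s S F G : good K s S F ->
  (forall sg b, Hyp K s S sg b -> forall x, 0 <= x <= 1 -> G sg b x = F sg b x) -> good K s S G.
Proof.
  intros [B [C [HC H]]] He. exists B, C. split; auto. intros sg b0 b H0 H1 x Hx.
  rewrite !He; auto.
Qed.

Lemma good_cst K s S c : good K s S (fun _ _ _ => c).
Proof.
  exists (Rabs c), 0. split. lra. intros. split. lra. unfold Rminus; rewrite Rplus_opp_r, Rabs_R0.
  rewrite Rmult_0_l; lra.
Qed.

Lemma good_mul K s S F G : good K s S F -> good K s S G ->
  good K s S (fun sg b x => F sg b x * G sg b x).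
Proof.
  intros [B1 [C1 [HC1 H1]]] [B2 [C2 [HC2 H2]]].
  exists (Rabs B1 * Rabs B2), (Rabs B1 * C2 + Rabs B2 * C1). split.
  { pose proof (Rabs_pos B1); pose proof (Rabs_pos B2); nra. }
  intros sg b0 b Hb0 Hb x Hx.
  destruct (H1 sg b0 b Hb0 Hb x Hx) as [a1 d1].
  destruct (H2 sg b0 b Hb0 Hb x Hx) as [a2 d2].
  destruct (H1 sg b0 b0 Hb0 Hb0 x Hx) as [a1' _].
  pose proof (Dist_ge0 b0 b).
  set (f0 := F sg b0 x) in *. set (f := F sg b x) in *.
  set (g0 := G sg b0 x) in *. set (g := G sg b x) in *. set (D := Dist b0 b) in *.
  split.
  - rewrite Rabs_mult. apply Rmult_le_compat; try apply Rabs_pos.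
    eapply Rle_trans; [apply a1| apply RRle_abs]. eapply Rle_trans; [apply a2| apply RRle_abs].
  - replace (f0 * g0 - f * g) with (f0 * (g0 - g) + g * (f0 - f)) by ring.
    eapply Rle_trans. apply Rabs_triang. rewrite !Rabs_mult.
    assert (A1 : Rabs f0 <= Rabs B1) by (eapply Rle_trans; [apply a1'| apply RRle_abs]).
    assert (A2 : Rabs g <= Rabs B2) by (eapply Rle_trans; [apply a2| apply RRle_abs]).
    pose proof (Rabs_pos f0). pose proof (Rabs_pos g).
    pose proof (Rabs_pos (g0 - g)). pose proof (Rabs_pos (f0 - f)).
    assert (Rabs f0 * Rabs (g0 - g) <= Rabs B1 * (C2 * D)) by (apply Rmult_le_compat; auto).
    assert (Rabs g * Rabs (f0 - f) <= Rabs B2 * (C1 * D)) by (apply Rmult_le_compat; auto).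
    nra.
Qed.

Lemma good_add K s S F G : good K s S F -> good K s S G ->
  good K s S (fun sg b x => F sg b x + G sg b x).
Proof.
  intros [B1 [C1 [HC1 H1]]] [B2 [C2 [HC2 H2]]].
  exists (B1 + B2), (C1 + C2). split. lra.
  intros sg b0 b Hb0 Hb x Hx.
  destruct (H1 sg b0 b Hb0 Hb x Hx) as [a1 d1].
  destruct (H2 sg b0 b Hb0 Hb x Hx) as [a2 d2].
  split.
  - eapply Rle_trans. apply Rabs_triang. lra.
  - replace (F sg b0 x + G sg b0 x - (F sg b x + G sg b x)) with
      ((F sg b0 x - F sg b x) + (G sg b0 x - G sg b x)) by ring.
    eapply Rle_trans. apply Rabs_triang. lra.
Qed.

Lemma good_opp K s S F : good K s S F -> good K s S (fun sg b x => - F sg b x).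
Proof.
  intros [B1 [C1 [HC1 H1]]]. exists B1, C1. split; auto.
  intros sg b0 b Hb0 Hb x Hx. destruct (H1 sg b0 b Hb0 Hb x Hx) as [a1 d1].
  rewrite Rabs_Ropp. split; auto.
  replace (- F sg b0 x - - F sg b x) with (- (F sg b0 x - F sg b x)) by ring.
  rewrite Rabs_Ropp; auto.
Qed.

Lemma good_eval K s S F c : 0 <= c <= 1 -> good K s S F -> good K s S (fun sg b _ => F sg b c).
Proof.
  intros Hc [B1 [C1 [HC1 H1]]]. exists B1, C1. split; [auto|].
  intros sg b0 b Hb0 Hb x Hx. apply H1; auto.
Qed.

Lemma exp_mono x y : x <= y -> exp x <= exp y.
Proof. intros [H|H]. left; now apply exp_increasing. subst; lra. Qed.

Lemma expm1_bound t : Rabs (exp t - 1) <= Rabs t * exp (Rabs t).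
Proof.
  pose proof (exp_ineq1_le t). pose proof (exp_ineq1_le (- t)).
  pose proof (exp_pos t).
  assert (exp t * exp (- t) = 1) by (rewrite <- exp_plus; replace (t + - t) with 0 by ring; apply exp_0).
  assert (exp t - 1 <= t * exp t) by nra.
  destruct (Rle_or_lt 0 t).
  - rewrite (Rabs_right t) by lra. rewrite Rabs_right by lra. lra.
  - rewrite (Rabs_left t) by lra. rewrite Rabs_left1.
    2:{ assert (exp t < 1). { rewrite <- exp_0. apply exp_increasing. lra. } lra. }
    nra.
Qed.

Lemma exp_lip a0 a B : Rabs a0 <= B -> Rabs a <= B ->
  Rabs (exp a0 - exp a) <= exp B * exp (2 * B) * Rabs (a0 - a).
Proof.
  intros H0 H1.
  replace (exp a0 - exp a) with (exp a * (exp (a0 - a) - 1)).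
  2:{ rewrite Rmult_minus_distr_l, <- exp_plus. replace (a + (a0 - a)) with a0 by ring. ring. }
  rewrite Rabs_mult, (Rabs_right (exp a)) by (left; apply exp_pos).
  pose proof (expm1_bound (a0 - a)).
  assert (exp a <= exp B) by (apply exp_mono; apply Rabs_le_between in H1 ; lra).
  assert (Rabs (a0 - a) <= 2 * B).
  { unfold Rminus. eapply Rle_trans. apply Rabs_triang. rewrite Rabs_Ropp. lra. }
  assert (exp (Rabs (a0 - a)) <= exp (2 * B)) by (apply exp_mono; lra).
  pose proof (exp_pos a). pose proof (exp_pos (Rabs (a0 - a))). pose proof (Rabs_pos (a0 - a)).
  pose proof (Rabs_pos (exp (a0 - a) - 1)).
  apply Rle_trans with (exp B * (Rabs (a0 - a) * exp (Rabs (a0 - a)))).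
  apply Rmult_le_compat; auto; lra.
  assert (Rabs (a0 - a) * exp (Rabs (a0 - a)) <= Rabs (a0 - a) * exp (2 * B)) by
    (apply Rmult_le_compat_l; auto).
  pose proof (exp_pos B). nra.
Qed.



Lemma good_exp K s S F : good K s S F -> good K s S (fun sg b x => exp (F sg b x)).
Proof.
  intros [B1 [C1 [HC1 H1]]]. exists (exp B1), (exp B1 * exp (2 * B1) * C1). split.
  { pose proof (exp_pos B1); pose proof (exp_pos (2*B1)). apply Rmult_le_pos; auto; nra. }
  intros sg b0 b Hb0 Hb x Hx.
  destruct (H1 sg b0 b Hb0 Hb x Hx) as [a1 d1].
  destruct (H1 sg b0 b0 Hb0 Hb0 x Hx) as [a1' _].
  split.
  - rewrite Rabs_right by (left; apply exp_pos). apply exp_mono.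
    eapply Rle_trans; [apply RRle_abs| exact a1].
  - eapply Rle_trans. apply exp_lip; eauto.
    pose proof (exp_pos B1); pose proof (exp_pos (2*B1)).
    apply Rle_trans with (exp B1 * exp (2*B1) * (C1 * Dist b0 b));
      [apply Rmult_le_compat_l; [nra|exact d1] | right; ring].
Qed.

Lemma lowb_exp K s S F : good K s S F -> lowb K s S (fun sg b x => exp (F sg b x)).
Proof.
  intros HF. destruct (good_bound _ _ _ _ HF) as [B HB].
  exists (exp (- B)). split. apply exp_pos.
  intros sg b Hb x Hx. apply exp_mono. specialize (HB sg b Hb x Hx).
  apply Rabs_le_between in HB. lra.
Qed.

Lemma good_inv K s S F : good K s S F -> lowb K s S F ->
  good K s S (fun sg b x => / F sg b x).
Proof.
  intros [B1 [C1 [HC1 H1]]] [m [Hm Hl]].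
  exists (/ m), (C1 / (m * m)). split.
  { unfold Rdiv. apply Rmult_le_pos; auto. left. apply Rinv_0_lt_compat; nra. }
  intros sg b0 b Hb0 Hb x Hx.
  destruct (H1 sg b0 b Hb0 Hb x Hx) as [a1 d1].
  pose proof (Hl sg b Hb x Hx). pose proof (Hl sg b0 Hb0 x Hx).
  split.
  - rewrite Rabs_right. apply Rinv_le_contravar; auto.
    left; apply Rinv_0_lt_compat; lra.
  - replace (/ F sg b0 x - / F sg b x) with ((F sg b x - F sg b0 x) / (F sg b0 x * F sg b x))
      by (field; lra).
    unfold Rdiv. rewrite Rabs_mult, <- Rabs_Ropp, Ropp_minus_distr.
    rewrite (Rabs_right (/ _)) by (left; apply Rinv_0_lt_compat; nra).
    pose proof (Dist_ge0 b0 b).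
    replace (C1 * / (m * m) * Dist b0 b) with ((C1 * Dist b0 b) * / (m * m)) by ring.
    apply Rmult_le_compat; auto. apply Rabs_pos. left; apply Rinv_0_lt_compat; nra.
    apply Rinv_le_contravar. nra. apply Rmult_le_compat; lra.
Qed.

Lemma good_sig K s S : 0 < s -> good K s S (fun sg b x => / (sg x)^2).
Proof.
  intros Hs. exists (/ (s^2)), 0. split. lra.
  intros sg b0 b Hb0 Hb x Hx. split.
  - destruct Hb as [Hsg _]. specialize (Hsg x).
    rewrite Rabs_right. apply Rinv_le_contravar. nra. apply pow_incr; lra.
    left; apply Rinv_0_lt_compat; nra.
  - unfold Rminus; rewrite Rplus_opp_r, Rabs_R0. rewrite Rmult_0_l; lra.
Qed.

Lemma good_int0 K s S F : good K s S F -> ctn K s S F ->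
  good K s S (fun sg b x => RInt (F sg b) 0 x).
Proof.
  intros [B1 [C1 [HC1 H1]]] Hc. exists (Rabs B1), C1. split; [auto|].
  intros sg b0 b Hb0 Hb x Hx. pose proof (Dist_ge0 b0 b).
  assert (e0 : ex_RInt (F sg b0) 0 x) by (apply exc; auto).
  assert (e1 : ex_RInt (F sg b) 0 x) by (apply exc; auto).
  split.
  - eapply Rle_trans. apply abs_RInt_le_const. lra. auto.
    intros t Ht. eapply Rle_trans; [apply (proj1 (H1 sg b b Hb Hb t ltac:(lra)))| apply RRle_abs].
    pose proof (Rabs_pos B1). nra.
  - rewrite <- RInt_sub; auto. eapply Rle_trans. apply abs_RInt_le_const. lra.
    apply (ex_RInt_minus (V:=R_CompleteNormedModule)); auto.
    intros t Ht. apply (proj2 (H1 sg b0 b Hb0 Hb t ltac:(lra))). pose proof (Rmult_le_pos _ _ HC1 H). nra.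
Qed.

Lemma good_int1 K s S F : good K s S F -> ctn K s S F ->
  good K s S (fun sg b x => RInt (F sg b) x 1).
Proof.
  intros [B1 [C1 [HC1 H1]]] Hc. exists (Rabs B1), C1. split; [auto|].
  intros sg b0 b Hb0 Hb x Hx. pose proof (Dist_ge0 b0 b).
  assert (e0 : ex_RInt (F sg b0) x 1) by (apply exc; auto).
  assert (e1 : ex_RInt (F sg b) x 1) by (apply exc; auto).
  split.
  - eapply Rle_trans. apply abs_RInt_le_const. lra. auto.
    intros t Ht. eapply Rle_trans; [apply (proj1 (H1 sg b b Hb Hb t ltac:(lra)))| apply RRle_abs].
    pose proof (Rabs_pos B1). nra.
  - rewrite <- RInt_sub; auto. eapply Rle_trans. apply abs_RInt_le_const. lra.
    apply (ex_RInt_minus (V:=R_CompleteNormedModule)); auto.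
    intros t Ht. apply (proj2 (H1 sg b0 b Hb0 Hb t ltac:(lra))). pose proof (Rmult_le_pos _ _ HC1 H). nra.
Qed.


Definition hf (sg b : R -> R) (y : R) := 2 * b y / (sg y)^2.
Definition IbR : Fam := fun sg b x => RInt (hf sg b) 0 x.

Lemma sg_pos K s S sg b : 0 < s -> Hyp K s S sg b -> forall x, 0 < sg x.
Proof. intros Hs [H _] x. specialize (H x). lra. Qed.

Lemma hf_cont K s S sg b : 0 < s -> Hyp K s S sg b -> forall y, ctR (hf sg b) y.
Proof.
  intros Hs Hb y. pose proof (sg_pos _ _ _ _ _ Hs Hb y).
  destruct Hb as [_ [Hc [Hbc _]]]. unfold hf.
  apply cdiv. apply cmul. apply ccst. auto. apply cpow2; auto.
  apply pow_nonzero; lra.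
Qed.

Lemma good_Ib K s S : 0 < s -> good K s S IbR.
Proof.
  intros Hs. exists (2 * K / s^2), (2 / s^2). split.
  { unfold Rdiv. apply Rmult_le_pos. lra. left. apply Rinv_0_lt_compat; nra. }
  intros sg b0 b Hb0 Hb x Hx.
  pose proof (hf_cont _ _ _ _ _ Hs Hb0) as c0. pose proof (hf_cont _ _ _ _ _ Hs Hb) as c1.
  assert (Hsq : forall y, s^2 <= (sg y)^2).
  { intros y. destruct Hb as [H _]. specialize (H y). apply pow_incr. lra. }
  assert (Hsp : forall y, 0 < (sg y)^2). { intros y. pose proof (sg_pos _ _ _ _ _ Hs Hb y). nra. }
  split.
  - unfold IbR. eapply Rle_trans. apply (RInt_bound _ (fun _ => 2 * K / s^2)); auto.
    intros; apply ccst.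
    intros y Hy. unfold hf. unfold Rdiv. rewrite !Rabs_mult.
    rewrite (Rabs_right 2) by lra. rewrite (Rabs_right (/ _)) by (left; apply Rinv_0_lt_compat; auto).
    destruct Hb as [_ [_ [_ HK]]]. specialize (HK y Hy).
    pose proof (Rabs_pos (b y)).
    assert (/ (sg y)^2 <= / s^2) by (apply Rinv_le_contravar; auto; nra).
    assert (0 < / (sg y)^2) by (apply Rinv_0_lt_compat; auto).
    apply Rmult_le_compat; nra.
    rewrite RInt_cst. lra.
  - unfold IbR. rewrite <- RInt_sub by (apply exc; auto).
    eapply Rle_trans. apply (RInt_bound _ (fun y => 2 / s^2 * Rabs (b0 y - b y))); auto.
    intros; apply cminus; auto.
    intros y. destruct Hb0 as [_ [_ [h0 _]]]. destruct Hb as [_ [_ [h1 _]]].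
    apply cmul. apply ccst. apply cabs. apply cminus; auto.
    intros y Hy. unfold hf.
    assert (sg y <> 0) by (pose proof (sg_pos _ _ _ _ _ Hs Hb y); lra).
    replace (2 * b0 y / sg y ^ 2 - 2 * b y / sg y ^ 2) with ((b0 y - b y) * (2 / sg y ^2))
      by (field; auto).
    rewrite Rabs_mult, Rmult_comm. apply Rmult_le_compat_r. apply Rabs_pos.
    rewrite Rabs_right. unfold Rdiv. apply Rmult_le_compat_l. lra.
    apply Rinv_le_contravar; auto. nra.
    left. unfold Rdiv. apply Rmult_lt_0_compat. lra. apply Rinv_0_lt_compat; auto.
    rewrite RInt_sc. apply Rmult_le_compat_l.
    { unfold Rdiv. apply Rmult_le_pos. lra. left. apply Rinv_0_lt_compat; nra. }
    apply CS. destruct Hb0 as [_ [_ [h0 _]]]. destruct Hb as [_ [_ [h1 _]]].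
    intros; apply cminus; auto.
    apply exc. destruct Hb0 as [_ [_ [h0 _]]]. destruct Hb as [_ [_ [h1 _]]].
    intros; apply cabs; apply cminus; auto.
Qed.

Lemma ctn_Ib K s S : 0 < s -> ctn K s S IbR.
Proof.
  intros Hs sg b Hb x. unfold IbR. apply cont_RInt0. eapply hf_cont; eauto.
Qed.


Definition GR : Fam := fun sg b y => exp (- IbR sg b y).
Definition J1R : Fam := fun sg b x => RInt (GR sg b) x 1.
Definition J2R : Fam := fun sg b x => RInt (GR sg b) 0 x.
Definition E1R : Fam := fun sg b _ => exp (IbR sg b 1).
Definition QR : Fam := fun sg b x => E1R sg b x * J1R sg b x + J2R sg b x.
Definition piR : Fam := fun sg b x => exp (IbR sg b x) * / (sg x)^2 * QR sg b x.
Definition HR : Fam := fun sg b _ => RInt (piR sg b) 0 1.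
Definition pbR : Fam := fun sg b x => piR sg b x * / HR sg b x.

Lemma RInt_c01 (c : R) : c = RInt (fun _ : R => c) 0 1.
Proof. rewrite RInt_cst. ring. Qed.

Lemma lowb_mul K s S F G : lowb K s S F -> lowb K s S G -> lowb K s S (fun sg b x => F sg b x * G sg b x).
Proof.
  intros [m1 [H1 L1]] [m2 [H2 L2]]. exists (m1 * m2). split. nra.
  intros sg b Hb x Hx. specialize (L1 sg b Hb x Hx). specialize (L2 sg b Hb x Hx).
  apply Rmult_le_compat; lra.
Qed.

Lemma lowb_inv K s S F : good K s S F -> lowb K s S F -> lowb K s S (fun sg b x => / F sg b x).
Proof.
  intros HF [m [Hm L]]. destruct (good_bound _ _ _ _ HF) as [B HB].
  exists (/ (Rabs B + 1)). split. apply Rinv_0_lt_compat. pose proof (Rabs_pos B); lra.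
  intros sg b Hb x Hx. specialize (L sg b Hb x Hx). specialize (HB sg b Hb x Hx).
  apply Rinv_le_contravar. lra. apply Rabs_le_between in HB.
  pose proof (RRle_abs B). lra.
Qed.

Lemma lowb_sig K s S : 0 < s -> s <= S -> lowb K s S (fun sg b x => / (sg x)^2).
Proof.
  intros Hs HS. exists (/ S^2). split. apply Rinv_0_lt_compat. nra.
  intros sg b [Hsg _] x Hx. specialize (Hsg x). apply Rinv_le_contravar. nra.
  apply pow_incr; lra.
Qed.

Lemma ctn_GR K s S : 0 < s -> ctn K s S GR.
Proof. intros Hs sg b Hb x. unfold GR. apply cexp, copp. now apply (ctn_Ib K s S). Qed.
Lemma good_GR K s S : 0 < s -> good K s S GR.
Proof. intros Hs. apply good_exp, good_opp, good_Ib; auto. Qed.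
Lemma lowb_GR K s S : 0 < s -> lowb K s S GR.
Proof. intros Hs. apply lowb_exp, good_opp, good_Ib; auto. Qed.

Lemma good_J1 K s S : 0 < s -> good K s S J1R.
Proof. intros Hs. apply good_int1. now apply good_GR. now apply ctn_GR. Qed.
Lemma good_J2 K s S : 0 < s -> good K s S J2R.
Proof. intros Hs. apply good_int0. now apply good_GR. now apply ctn_GR. Qed.
Lemma good_E1 K s S : 0 < s -> good K s S E1R.
Proof. intros Hs. apply good_exp. apply (good_eval _ _ _ IbR 1). lra. now apply good_Ib. Qed.
Lemma good_QR K s S : 0 < s -> good K s S QR.
Proof. intros Hs. apply good_add. apply good_mul. now apply good_E1. now apply good_J1. now apply good_J2. Qed.
Lemma good_piR K s S : 0 < s -> good K s S piR.
Proof. intros Hs. apply good_mul. apply good_mul. apply good_exp. now apply good_Ib. now apply good_sig.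
  now apply good_QR. Qed.

Lemma ctn_J2 K s S : 0 < s -> ctn K s S J2R.
Proof. intros Hs sg b Hb x. apply cont_RInt0. now apply (ctn_GR K s S). Qed.
Lemma ctn_J1 K s S : 0 < s -> ctn K s S J1R.
Proof.
  intros Hs sg b Hb x. pose proof (ctn_GR K s S Hs sg b Hb) as Hc.
  apply (continuous_ext (fun t => RInt (GR sg b) 0 1 - RInt (GR sg b) 0 t)).
  { intros t. unfold J1R. rewrite <- (RInt_chasles (GR sg b) 0 t 1) by (apply exc; auto).
    change (RInt (GR sg b) 0 t + RInt (GR sg b) t 1 - RInt (GR sg b) 0 t = RInt (GR sg b) t 1). ring. }
  apply cminus. apply ccst. apply cont_RInt0; auto.
Qed.
Lemma ctn_QR K s S : 0 < s -> ctn K s S QR.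
Proof.
  intros Hs sg b Hb x. unfold QR. apply cplus. apply cmul. apply ccst.
  now apply (ctn_J1 K s S). now apply (ctn_J2 K s S).
Qed.
Lemma ctn_piR K s S : 0 < s -> ctn K s S piR.
Proof.
  intros Hs sg b Hb x. unfold piR. apply cmul. apply cmul. apply cexp. now apply (ctn_Ib K s S).
  apply cinv. apply cpow2. destruct Hb as [_ [H _]]; auto.
  apply pow_nonzero. pose proof (sg_pos _ _ _ _ _ Hs Hb x). lra.
  now apply (ctn_QR K s S).
Qed.

Lemma lowb_QR K s S : 0 < s -> lowb K s S QR.
Proof.
  intros Hs. destruct (lowb_exp _ _ _ _ (good_eval K s S IbR 1 ltac:(lra) (good_Ib K s S Hs)))
    as [m1 [Hm1 L1]].
  destruct (lowb_GR K s S Hs) as [m2 [Hm2 L2]].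
  exists (Rmin m1 1 * m2). split. apply Rmult_lt_0_compat; auto. apply Rmin_pos; lra.
  intros sg b Hb x Hx. specialize (L1 sg b Hb x Hx). simpl in L1.
  pose proof (ctn_GR K s S Hs sg b Hb) as Hc.
  assert (HJ1 : 0 <= J1R sg b x).
  { apply RInt_ge_0. lra. apply exc; auto. intros y Hy. pose proof (L2 sg b Hb y ltac:(lra)). lra. }
  assert (HJ2 : 0 <= J2R sg b x).
  { apply RInt_ge_0. lra. apply exc; auto. intros y Hy. pose proof (L2 sg b Hb y ltac:(lra)). lra. }
  assert (HJ : m2 <= J2R sg b x + J1R sg b x).
  { unfold J1R, J2R. rewrite RInt_chasles by (apply exc; auto).
    apply Rle_trans with (RInt (fun _ => m2) 0 1); [right; apply RInt_c01|].
    apply RInt_le. lra. apply ex_RInt_const. apply exc; auto.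
    intros y Hy. apply L2; auto; lra. }
  unfold QR, E1R.
  pose proof (Rmin_l m1 1). pose proof (Rmin_r m1 1).
  assert (Rmin m1 1 * J1R sg b x <= exp (IbR sg b 1) * J1R sg b x) by (apply Rmult_le_compat_r; lra).
  assert (Rmin m1 1 * J2R sg b x <= J2R sg b x) by nra.
  assert (0 < Rmin m1 1) by (apply Rmin_pos; lra).
  nra.
Qed.

Lemma lowb_piR K s S : 0 < s -> s <= S -> lowb K s S piR.
Proof.
  intros Hs HS. apply lowb_mul. apply lowb_mul. apply lowb_exp. now apply good_Ib.
  now apply lowb_sig. now apply lowb_QR.
Qed.

Lemma good_HR K s S : 0 < s -> good K s S HR.
Proof.
  intros Hs. apply (good_eval _ _ _ (fun sg b x => RInt (piR sg b) 0 x) 1). lra.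
  apply good_int0. now apply good_piR. now apply ctn_piR.
Qed.
Lemma lowb_HR K s S : 0 < s -> s <= S -> lowb K s S HR.
Proof.
  intros Hs HS. destruct (lowb_piR K s S Hs HS) as [m [Hm L]]. exists m. split; auto.
  intros sg b Hb x Hx. unfold HR.
  apply Rle_trans with (RInt (fun _ => m) 0 1); [right; apply RInt_c01|].
  apply RInt_le. lra. apply ex_RInt_const. apply exc. now apply (ctn_piR K s S).
  intros y Hy. apply L; auto; lra.
Qed.

Lemma good_pbR K s S : 0 < s -> s <= S -> good K s S pbR.
Proof.
  intros Hs HS. apply good_mul. now apply good_piR. apply good_inv. now apply good_HR. now apply lowb_HR.
Qed.
Lemma lowb_pbR K s S : 0 < s -> s <= S -> lowb K s S pbR.
Proof.
  intros Hs HS. apply lowb_mul. now apply lowb_piR. apply lowb_inv. now apply good_HR. now apply lowb_HR.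
Qed.

Lemma ctn_pbR K s S : 0 < s -> s <= S -> ctn K s S pbR.
Proof.
  intros Hs HS sg b Hb x. unfold pbR. apply cmul. now apply (ctn_piR K s S). apply ccst.
Qed.

Lemma int_pbR K s S : 0 < s -> s <= S -> forall sg b, Hyp K s S sg b -> RInt (pbR sg b) 0 1 = 1.
Proof.
  intros Hs HS sg b Hb. destruct (lowb_HR K s S Hs HS) as [m [Hm L]].
  specialize (L sg b Hb 0 ltac:(lra)). unfold pbR.
  rewrite (RInt_ext _ (fun x => / RInt (piR sg b) 0 1 * piR sg b x)) by (intros; apply Rmult_comm).
  rewrite RInt_sc. apply Rinv_l. unfold HR in L. lra.
  apply exc. now apply (ctn_piR K s S).
Qed.


Lemma ln_le x : 0 < x -> ln x <= x - 1.
Proof. intros H. pose proof (exp_ineq1_le (ln x)). rewrite exp_ln in H0; lra. Qed.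

Lemma pt_bounds p q m e Bb : 0 < m -> m <= p -> m <= q -> Rabs (p - q) <= e -> p <= Bb ->
  ln (p / q) * p <= (p - q) + e * e / m /\ (ln (p / q))^2 * p <= (e / m)^2 * Bb.
Proof.
  intros Hm Hp Hq He HB.
  assert (Hq0 : 0 < q) by lra. assert (Hp0 : 0 < p) by lra.
  assert (L1 : ln (p / q) <= (p - q) / q).
  { eapply Rle_trans. apply ln_le. apply Rdiv_lt_0_compat; lra. right; field; lra. }
  assert (L2 : - ln (p / q) <= (q - p) / p).
  { rewrite ln_div by lra. eapply Rle_trans with (ln (q / p)).
    rewrite ln_div by lra. lra.
    eapply Rle_trans. apply ln_le. apply Rdiv_lt_0_compat; lra. right; field; lra. }
  apply Rabs_le_between in He.
  assert (e0 : 0 <= e) by lra.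
  assert (Hiq : / q <= / m) by (apply Rinv_le_contravar; lra).
  assert (Hip : / p <= / m) by (apply Rinv_le_contravar; lra).
  pose proof (Rinv_0_lt_compat q Hq0). pose proof (Rinv_0_lt_compat p Hp0).
  pose proof (Rinv_0_lt_compat m Hm).
  split.
  - apply Rle_trans with ((p - q) / q * p). apply Rmult_le_compat_r; lra.
    replace ((p - q) / q * p) with ((p - q) + (p - q) * (p - q) * / q) by (field; lra).
    unfold Rdiv. apply Rplus_le_compat_l.
    assert (Hpq : (p - q) * (p - q) <= e * e) by nra.
    apply Rmult_le_compat; [apply Rle_0_sqr|lra|exact Hpq|exact Hiq].
  - assert (A1 : ln (p / q) <= e / m).
    { eapply Rle_trans. apply L1. unfold Rdiv. apply Rle_trans with (e * / q).
      apply Rmult_le_compat_r; lra. apply Rmult_le_compat_l; lra. }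
    assert (A2 : - ln (p / q) <= e / m).
    { eapply Rle_trans. apply L2. unfold Rdiv. apply Rle_trans with (e * / p).
      apply Rmult_le_compat_r; lra. apply Rmult_le_compat_l; lra. }
    assert (ln (p / q) ^ 2 <= (e / m) ^ 2) by nra.
    apply Rmult_le_compat; try nra.
Qed.


Lemma bridge K s S sg b : 0 < s -> Hyp K s S sg b -> pib sg b = pbR sg b.
Proof.
  intros Hs Hyb.
  assert (HI : Ib sg b = IbR sg b).
  { apply functional_extensionality. intros x. unfold Ib, IbR.
    apply Rint_RInt. apply exc. apply (hf_cont K s S sg b); auto. }
  assert (HP : pi_un sg b = piR sg b).
  { apply functional_extensionality. intros x. unfold pi_un. rewrite HI.
    pose proof (ctn_GR K s S Hs sg b Hyb) as Hc.
    rewrite !(Rint_RInt (fun y => exp (- IbR sg b y))) by (apply exc; auto).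
    reflexivity. }
  apply functional_extensionality. intros x. unfold pib, Hb. rewrite HP.
  rewrite Rint_RInt. reflexivity. apply exc. now apply (ctn_piR K s S Hs sg b Hyb).
Qed.

Lemma theta_hyp K0 sL sU sigma b : C2per sigma -> (forall x, sL <= sigma x <= sU) ->
  Theta K0 b -> Hyp K0 sL sU sigma b.
Proof.
  intros [_ [f' [f'' [Hd _]]]] Hs [_ [g' [Hg [_ [M1 [M2 [H1 [H2 H3]]]]]]]].
  split; [auto|]. split. intros x; apply (der_cont _ _ _ (Hd x)).
  split. intros x; apply (der_cont _ _ _ (Hg x)).
  intros x Hx. specialize (H1 x Hx). specialize (H2 0 ltac:(lra)).
  pose proof (Rabs_pos (g' 0)). lra.
Qed.


Theorem mainTheorem18 (K0 sigmaL sigmaU : R) :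
  0 < sigmaL -> sigmaL <= sigmaU ->
  exists A : R, 0 < A /\
    forall sigma : R -> R,
      C2per sigma ->
      (forall x, sigmaL <= sigma x <= sigmaU) ->
      forall b0 b : R -> R, Theta K0 b0 -> Theta K0 b ->
        A ^ 2 * Rmax (KL (pib sigma b0) (pib sigma b))
                     (Elog2 (pib sigma b0) (pib sigma b))
        <= L2sq b0 b.
Proof.
  intros Hs HS.
  destruct (good_pbR K0 sigmaL sigmaU Hs HS) as [B [C [HC HG]]].
  destruct (lowb_pbR K0 sigmaL sigmaU Hs HS) as [m [Hm HL]].
  set (C' := C * C / m + (C / m)^2 * Rabs B).
  assert (HC' : 0 <= C').
  { unfold C'. pose proof (Rabs_pos B). assert (0 <= C * C / m).
    { unfold Rdiv. apply Rmult_le_pos. nra. left; apply Rinv_0_lt_compat; lra. }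
    pose proof (pow2_ge_0 (C / m)). nra. }
  exists (/ sqrt (C' + 1)). split.
  { apply Rinv_0_lt_compat, sqrt_lt_R0; lra. }
  intros sigma Hsig Hsb b0 b Ht0 Ht.
  pose proof (theta_hyp _ _ _ _ _ Hsig Hsb Ht0) as H0.
  pose proof (theta_hyp _ _ _ _ _ Hsig Hsb Ht) as H1.
  rewrite (bridge _ _ _ _ _ Hs H0), (bridge _ _ _ _ _ Hs H1).
  pose proof (ctn_pbR _ _ _ Hs HS sigma b0 H0) as cp.
  pose proof (ctn_pbR _ _ _ Hs HS sigma b H1) as cq.
  pose proof (int_pbR _ _ _ Hs HS sigma b0 H0) as ip.
  pose proof (int_pbR _ _ _ Hs HS sigma b H1) as iq.
  set (p := pbR sigma b0) in *. set (q := pbR sigma b) in *.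
  set (D := Dist b0 b).
  assert (HD : L2sq b0 b = D^2).
  { unfold L2sq, D, Dist. destruct H0 as [_ [_ [c0 _]]]. destruct H1 as [_ [_ [c1 _]]].
    rewrite Rint_RInt. rewrite pow2_sqrt. reflexivity.
    apply RInt_ge_0. lra. apply exc. intros; apply cpow2, cminus; auto.
    intros; apply pow2_ge_0.
    apply exc. intros; apply cpow2, cminus; auto. }
  assert (PT : forall x, 0 <= x <= 1 ->
    ln (p x / q x) * p x <= (p x - q x) + (C * D) * (C * D) / m /\
    (ln (p x / q x))^2 * p x <= (C * D / m)^2 * Rabs B).
  { intros x Hx. destruct (HG sigma b0 b H0 H1 x Hx) as [_ d].
    destruct (HG sigma b0 b0 H0 H0 x Hx) as [a _].
    pose proof (HL sigma b0 H0 x Hx) as l0. pose proof (HL sigma b H1 x Hx) as l1.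
    exact (pt_bounds (p x) (q x) m (C*D) (Rabs B) Hm l0 l1 d
      (Rle_trans _ _ _ (RRle_abs _) (Rle_trans _ _ _ a (RRle_abs B)))). }
  assert (Pos : forall x, 0 <= x <= 1 -> 0 < p x /\ 0 < q x).
  { intros x Hx. pose proof (HL sigma b0 H0 x Hx) as A. pose proof (HL sigma b H1 x Hx) as A'.
    change (m <= p x) in A. change (m <= q x) in A'. lra. }
  assert (CT : forall z, Rmin 0 1 <= z <= Rmax 0 1 -> ctR (fun x => ln (p x / q x)) z).
  { intros z Hz. assert (Hz' : 0 <= z <= 1).
    { rewrite Rmin_left in Hz by lra. rewrite Rmax_right in Hz by lra. exact Hz. }
    destruct (Pos z Hz') as [pz qz].
    apply (cln (fun x => p x / q x) z). apply (cdiv p q z). apply cp. apply cq.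
    apply Rgt_not_eq; exact qz. apply Rdiv_lt_0_compat; assumption. }
  pose proof (Dist_ge0 b0 b) as HD0. fold D in HD0.
  assert (E1 : ex_RInt (fun x => ln (p x / q x) * p x) 0 1).
  { apply (ex_RInt_continuous (V:=R_CompleteNormedModule)). intros z Hz.
    apply (cmul (fun x => ln (p x / q x)) p z). apply CT; exact Hz. apply cp. }
  assert (E2 : ex_RInt (fun x => (ln (p x / q x))^2 * p x) 0 1).
  { apply (ex_RInt_continuous (V:=R_CompleteNormedModule)). intros z Hz.
    apply (cmul (fun x => (ln (p x / q x))^2) p z). apply (cpow2 (fun x => ln (p x / q x)) z).
    apply CT; exact Hz. apply cp. }
  assert (Ep : ex_RInt p 0 1) by (apply exc; exact cp).
  assert (Eq : ex_RInt q 0 1) by (apply exc; exact cq).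
  assert (Epq : ex_RInt (fun x => p x - q x) 0 1).
  { apply exc. intros; apply (cminus p q). apply cp. apply cq. }
  assert (KLb : KL p q <= C * C / m * D^2).
  { unfold KL. rewrite (Rint_RInt _ _ _ E1).
    eapply Rle_trans. apply (RInt_le _ (fun x => (p x - q x) + (C * D) * (C * D) / m) 0 1).
    apply Rle_0_1. exact E1.
    apply (ex_RInt_plus (V:=R_CompleteNormedModule) (fun x => p x - q x) (fun _ => (C * D) * (C * D) / m)).
    exact Epq. apply ex_RInt_const.
    intros x Hx. apply PT. split; left; apply Hx.
    rewrite (RInt_add (fun x => p x - q x) (fun _ => (C * D) * (C * D) / m)); [|exact Epq|apply ex_RInt_const].
    rewrite (RInt_sub p q 0 1 Ep Eq), RInt_cst, ip, iq. right. unfold Rdiv. ring. }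
  assert (Eb : Elog2 p q <= (C / m)^2 * Rabs B * D^2).
  { unfold Elog2. rewrite (Rint_RInt _ _ _ E2).
    eapply Rle_trans. apply (RInt_le _ (fun x => (C * D / m)^2 * Rabs B) 0 1).
    apply Rle_0_1. exact E2. apply ex_RInt_const.
    intros x Hx. apply PT. split; left; apply Hx.
    rewrite RInt_cst. right. unfold Rdiv. ring. }
  assert (Mx : Rmax (KL p q) (Elog2 p q) <= C' * D^2).
  { assert (N1 : 0 <= (C / m)^2 * Rabs B * D^2).
    { apply Rmult_le_pos. apply Rmult_le_pos. apply pow2_ge_0. apply Rabs_pos. apply pow2_ge_0. }
    assert (N2 : 0 <= C * C / m * D^2).
    { apply Rmult_le_pos. unfold Rdiv. apply Rmult_le_pos. apply Rle_0_sqr.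
      left; apply Rinv_0_lt_compat; lra. apply pow2_ge_0. }
    assert (E : C' * D^2 = C * C / m * D^2 + (C / m)^2 * Rabs B * D^2) by (unfold C'; ring).
    apply Rmax_lub; lra. }
  rewrite HD.
  assert (HA : (/ sqrt (C' + 1))^2 = / (C' + 1)).
  { rewrite pow_inv, pow2_sqrt by lra. reflexivity. }
  rewrite HA.
  assert (0 < / (C' + 1)) by (apply Rinv_0_lt_compat; lra).
  apply Rle_trans with (/ (C' + 1) * (C' * D^2)).
  apply Rmult_le_compat_l; lra.
  pose proof (pow2_ge_0 D).
  replace (/ (C' + 1) * (C' * D ^ 2)) with (D^2 - D^2 / (C' + 1)) by (field; lra).
  assert (0 <= D^2 / (C' + 1)) by (unfold Rdiv; apply Rmult_le_pos; lra).
  lra.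
Qed.
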